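(* Let $G$ be a group, let $k\geqslant 1$ and $\alpha,\beta>0$. Suppose $U$ is a $k$-approximate group in $G$ satisfying $|U^n|\geqslant(\alpha|U|)^{\beta n}$ for every $n\in\mathbb{N}$. Then $|U|\leqslant k^{\lceil 2/\beta\rceil-1}/\alpha^2$.
   Context: A finite symmetric subset $U\subset G$ is a $k$-approximate group if there is a finite subset $X\subset G$ with $|X|\leqslant k$ and $U^2\subset XU$. Here $U^n=\{u_1\cdots u_n:u_i\in U\}$. *)

(* Defs.v *)
From HB Require Import structures.
From mathcomp Require Import all_boot all_order all_algebra.
From mathcomp Require Import finmap.
From mathcomp Require Import all_classical all_reals.
From mathcomp Require Import exp.
Set Implicit Arguments. Unset Strict Implicit. Unset Printing Implicit Defensive.
Import Order.TTheory GRing.Theory Num.Theory.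
Local Open Scope fset_scope.

Definition is_group (G : Type) (mul : G -> G -> G) (one : G) (inv : G -> G) : Prop :=
  [/\ forall x y z, mul x (mul y z) = mul (mul x y) z,
      forall x, mul one x = x, forall x, mul x one = x,
      forall x, mul (inv x) x = one & forall x, mul x (inv x) = one].

Definition setmul (G : choiceType) (mul : G -> G -> G) (A B : {fset G}) : {fset G} :=
  [fset mul a b | a in A, b in B].

Fixpoint setpow (G : choiceType) (mul : G -> G -> G) (one : G) (U : {fset G}) (n : nat)
  : {fset G} :=
  match n with
  | 0 => [fset one]
  | n'.+1 => setmul mul U (setpow mul one U n')
  end.

Definition symmetric_set (G : choiceType) (inv : G -> G) (U : {fset G}) : Prop :=
  forall u, u \in U -> inv u \in U.

Definition approx_group (R : realType) (G : choiceType) (mul : G -> G -> G) (inv : G -> G)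
  (k : R) (U : {fset G}) : Prop :=
  symmetric_set inv U /\
  exists X : {fset G}, ((#|` X |)%:R <= k)%R /\ setmul mul U U `<=` setmul mul X U.

(* Main.v *)
Require Import Defs.
From HB Require Import structures.
From mathcomp Require Import all_boot all_order all_algebra.
From mathcomp Require Import finmap.
From mathcomp Require Import all_classical all_reals.
From mathcomp Require Import exp.
From mathcomp Require Import lra.
Import Order.TTheory GRing.Theory Num.Theory.

Section Comb.
Local Open Scope fset_scope.
Variables (G : choiceType) (mul : G -> G -> G).

Lemma size_enum_fset (A : {fset G}) : size (enum_finmem (mem A)) = #|` A|.
Proof.
have h := @card_imfset imfset_key G G id (mem A) (fun x y (e : x = y) => e).
by rewrite -h imfset_id.
Qed.

Lemma setmulP (X A : {fset G}) z :
  reflect (exists2 x, x \in X & exists2 a, a \in A & z = mul x a) (z \in setmul mul X A).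
Proof. exact: imfset2P. Qed.

Lemma in_setmul (X A : {fset G}) x a : x \in X -> a \in A -> mul x a \in setmul mul X A.
Proof. by move=> hx ha; apply/setmulP; exists x => //; exists a. Qed.

Lemma card_setmul (A X : {fset G}) : (#|` setmul mul X A| <= #|` X| * #|` A|)%N.
Proof.
move: {2}#|` X| (erefl #|` X|) => n; elim: n X => [|n IH] X hX.
  move/eqP: hX; rewrite cardfs_eq0 => /eqP ->.
  rewrite mul0n leqn0 cardfs_eq0; apply/eqP/fsetP => z; rewrite in_fset0.
  by apply/negbTE/negP => /setmulP [x]; rewrite in_fset0.
have : X != fset0 by rewrite -cardfs_gt0 hX.
case/fset0Pn => x hx.
have hX' : #|` X `\ x| = n by move: hX; rewrite (cardfsD1 x) hx add1n => -[].
apply: (leq_trans (fsubset_leq_card (_ : _ `<=` [fset mul x a | a in A] `|` setmul mul (X `\ x) A))).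
  apply/fsubsetP => z /setmulP [y hy [a ha ->]].
  rewrite in_fsetU; case: (eqVneq y x) => [->|nyx].
    by rewrite in_imfset.
  by apply/orP; right; apply: in_setmul => //; rewrite in_fsetD1 nyx.
apply: (leq_trans (leq_card_fsetU _ _)).
rewrite hX mulSn leq_add //.
  by rewrite -size_enum_fset leq_imfset_card.
by rewrite -hX' IH.
Qed.

End Comb.

Section Pow.
Local Open Scope fset_scope.
Variables (G : choiceType) (mul : G -> G -> G) (one : G) (inv : G -> G).
Hypothesis Ggrp : is_group mul one inv.

Lemma setpow_sub (U X : {fset G}) n :
  setmul mul U U `<=` setmul mul X U ->
  setpow mul one U n.+2 `<=` setmul mul X (setpow mul one U n.+1).
Proof.
case: Ggrp => assoc _ _ _ _ hUX.
apply/fsubsetP => z /setmulP [u1 hu1 [w /setmulP [u2 hu2 [w' hw' ->]] ->]].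
rewrite assoc.
have /(fsubsetP hUX) /setmulP [x hx [u' hu' ->]] := @in_setmul G mul _ _ _ _ hu1 hu2.
rewrite -assoc; apply: in_setmul => //=; exact: in_setmul.
Qed.

Lemma card_setpow (U X : {fset G}) n :
  setmul mul U U `<=` setmul mul X U ->
  (#|` setpow mul one U n.+1| <= #|` X| ^ n * #|` U|)%N.
Proof.
move=> hUX; elim: n => [|n IH].
  rewrite expn0 mul1n.
  apply: (leq_trans (card_setmul _ _ _ _)).
  by rewrite cardfs1 muln1.
apply: (leq_trans (fsubset_leq_card (setpow_sub _ _ n hUX))).
apply: (leq_trans (card_setmul _ _ _ _)).
by rewrite expnS -mulnA leq_mul2l IH orbT.
Qed.
End Pow.

Local Open Scope ring_scope.

Theorem proposition2p13 (R : realType) (G : choiceType)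
  (mul : G -> G -> G) (one : G) (inv : G -> G) (Ggrp : is_group mul one inv)
  (k alpha beta : R) (hk : 1 <= k) (halpha : 0 < alpha) (hbeta : 0 < beta)
  (U : {fset G}) (hU : approx_group mul inv k U)
  (hgrowth : forall n : nat, (0 < n)%N ->
      (alpha * (#|` U |)%:R) `^ (beta * n%:R) <= (#|` setpow mul one U n |)%:R) :
  (#|` U |)%:R <= k ^+ `|Num.ceil (2 / beta) - 1|%N / alpha ^+ 2.
Proof.
case: hU => _ [X [hXk hUX]].
set m := Num.ceil (2 / beta).
set N := `|m - 1|%N.
have m1 : 1 <= m by rewrite -gtz0_ge1 /m ceil_gt0 divr_gt0.
have hN : (N.+1)%:R = m%:~R :> R.
  rewrite /N -addn1 natrD -[_%:R]/(((`|m - 1|%N)%:Z)%:~R) gez0_abs ?subr_ge0 //.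
  by rewrite intrD intrN /= subrK.
have hbN : 2 <= beta * (N.+1)%:R.
  rewrite hN -ler_pdivrMl // mulrC; exact: ceil_ge.
set c := (#|` U |)%:R : R.
have c0 : 0 <= c by rewrite /c ler0n.
have kN : 1 <= k ^+ N by rewrite exprn_ege1.
have hX0 : 0 <= (#|` X|)%:R :> R by rewrite ler0n.
have key : (alpha * c) `^ (beta * (N.+1)%:R) <= k ^+ N * c.
  apply: le_trans (hgrowth N.+1 isT) _.
  apply: le_trans (_ : ((#|` X| ^ N * #|` U|)%N)%:R <= _).
    by rewrite ler_nat (card_setpow _ _ _ _ Ggrp).
  rewrite natrM natrX /c ler_wpM2r ?ler0n // lerXn2r // ?nnegrE //.
  by apply: le_trans hk.
have a2 : 0 < alpha ^+ 2 by rewrite exprn_gt0.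
rewrite ler_pdivlMr //.
have [ac1|ac1] := leP 1 (alpha * c).
  have h2 : (alpha * c) ^+ 2 <= k ^+ N * c.
    apply: le_trans key.
    rewrite -powR_mulrn; last by apply: le_trans ac1.
    exact: ler_powR.
  have cpos : 0 < c.
    rewrite lt0r c0 andbT; apply/eqP => c0'; move: ac1; rewrite c0' mulr0; lra.
  rewrite -(ler_pM2r cpos); nra.
have [c1|c1] := leP 1 c.
  nra.
have : c = 0.
  by move: c1; rewrite /c -[1 : R]/(1%:R) ltr_nat ltnS leqn0 => /eqP ->.
move=> ->; nra.
Qed.
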